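(* Let $K$ be a circle of radius $1$ and centre $O$. Let $A,B\in K$ be such that the triangle $OAB$ is positively (counter-clockwise) oriented and $\eta=\angle BOA<1/5$. Let $K_A$ and $K_B$ be the circles obtained by rotating $K$ about the points $A$ and $B$ in the positive direction by the angles $\alpha$ and $\beta$ respectively, where $0<\alpha<3\beta/4$ and $\beta<\eta$. Then one of the intersection points of $K_A$ and $K_B$ lies inside $K$, and its distance from $A$ is less than $20\eta$.
   Context: The positive direction of rotation is counter-clockwise. *)

(* Defs.v *)
From Stdlib Require Import Reals Lra.
Open Scope R_scope.

Definition point := (R * R)%type.

Definition pdist (P Q : point) : R :=
  sqrt ((fst P - fst Q)^2 + (snd P - snd Q)^2).

Definition angle (P O Q : point) : R :=
  acos (((fst P - fst O) * (fst Q - fst O) + (snd P - snd O) * (snd Q - snd O))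
        / (pdist P O * pdist Q O)).

Definition ccw (P Q S : point) : Prop :=
  (fst Q - fst P) * (snd S - snd P) - (snd Q - snd P) * (fst S - fst P) > 0.

Definition rotate (C : point) (t : R) (X : point) : point :=
  (fst C + cos t * (fst X - fst C) - sin t * (snd X - snd C),
   snd C + sin t * (fst X - fst C) + cos t * (snd X - snd C)).

(* Main.v *)
Require Import Defs.
From Stdlib Require Import Reals.
From Stdlib Require Import Lra Psatz.
Open Scope R_scope.

Lemma sin_lb3 x : 0 <= x -> x <= PI -> x - x^3/6 <= sin x.
Proof.
  intros H1 H2. destruct (sin_bound x 0 H1 H2) as [H _].
  unfold sin_approx in H. simpl in H. unfold sin_term in H. simpl in H. lra.
Qed.
Lemma ps u v p q : p = u - v -> q = u + v -> sin u * sin v = (cos p - cos q)/2.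
Proof. intros -> ->. rewrite cos_minus, cos_plus. field. Qed.
Lemma ps2 u v p q : p = v - u -> q = u + v -> sin u * sin v = (cos p - cos q)/2.
Proof. intros -> ->. rewrite cos_minus, cos_plus. field. Qed.
Lemma cc u v p q : p = u - v -> q = u + v -> cos u * cos v = (cos p + cos q)/2.
Proof. intros -> ->. rewrite cos_minus, cos_plus. field. Qed.
Lemma cm u v p : p = u - v -> cos p = cos u * cos v + sin u * sin v.
Proof. intros ->. apply cos_minus. Qed.
Lemma pyth x : sin x ^ 2 + cos x ^ 2 = 1.
Proof. pose proof (sin2_cos2 x). unfold Rsqr in H. lra. Qed.

Lemma key a b e x :
 (1 - cos (2*a) + cos (2*x) - cos e + cos (e + 2*b))^2
 + (sin (2*x) - sin (2*a) - sin e + sin (e + 2*b))^2 - 1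
 = 4*(sin b * sin b + sin b * sin (e - 2*a + b)
      + 2*cos x*(sin b*sin (x - e - b) - sin a * sin (x - a))).
Proof.
  set (Z := 2*(2 - cos (2*b) + cos (e-2*a) - cos (e-2*a+2*b) + cos (2*x-2*b-e)
     + cos (2*b+e) - cos e - cos (2*x-e) - cos (2*x-2*a) - cos (2*a) + cos (2*x))).
  transitivity Z.
  - unfold Z.
    rewrite (cm (e+2*b) e (2*b)) by ring.
    rewrite (cm e (2*a) (e-2*a)) by ring.
    rewrite (cm (e+2*b) (2*a) (e-2*a+2*b)) by ring.
    rewrite (cm (2*x) (e+2*b) (2*x-2*b-e)) by ring.
    replace (2*b+e) with (e+2*b) by ring.
    rewrite (cm (2*x) e (2*x-e)) by ring.
    rewrite (cm (2*x) (2*a) (2*x-2*a)) by ring.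
    pose proof (pyth (2*a)). pose proof (pyth (2*x)). pose proof (pyth e).
    pose proof (pyth (e+2*b)). lra.
  - unfold Z.
    rewrite (ps b b 0 (2*b)) by ring.
    rewrite (ps2 b (e-2*a+b) (e-2*a) (e-2*a+2*b)) by ring.
    rewrite (ps2 b (x-e-b) (x-e-2*b) (x-e)) by ring.
    rewrite (ps2 a (x-a) (x-2*a) x) by ring.
    assert (E1 : cos x * cos (x-e-2*b) = (cos (2*b+e) + cos (2*x-2*b-e))/2) by (apply cc; ring).
    assert (E2 : cos x * cos (x-e) = (cos e + cos (2*x-e))/2) by (apply cc; ring).
    assert (E3 : cos x * cos (x-2*a) = (cos (2*a) + cos (2*x-2*a))/2) by (apply cc; ring).
    assert (E4 : cos x * cos x = (cos 0 + cos (2*x))/2) by (apply cc; ring).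
    rewrite cos_0 in *. nra.
Qed.
Lemma poly a b e : 0 < a -> a < 3*b/4 -> 0 < b -> b < e/2 -> e < 1/5 ->
  0 < 998/1000*b*(998/1000*b + (e-2*a+b)*(1-375/1000*e*e) + 2*(4*e-b)*(1-8*e*e/3)) - 2*a*(5*e-a).
Proof.
  intros.
  assert (He2 : e*e < 4/100) by nra.
  assert (HC : (e-2*a+b)*(375/1000*e*e) + 2*(4*e-b)*(8*e*e/3) <= 88/100*e).
  { assert (0 <= e-2*a+b <= 3/2*e) by lra. assert (0 <= 4*e - b <= 4*e) by lra.
    assert ((e-2*a+b)*(e*e) <= 3/2*e*(4/100)) by nra.
    assert ((4*e-b)*(e*e) <= 4*e*(4/100)) by nra. nra. }
  assert (Q: 0 < 998/1000*b*(9*e - 2*a - 2/1000*b - 88/100*e) - 10*a*e + 2*a*a) by nra.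
  nra.
Qed.

Lemma key_pos a b e : 0 < a -> a < 3*b/4 -> 0 < b -> b < e/2 -> e < 1/5 ->
 0 < sin b * sin b + sin b * sin (e - 2*a + b)
     + 2*cos (5*e)*(sin b*sin (5*e - e - b) - sin a * sin (5*e - a)).
Proof.
  intros Ha Hab Hb Hbe He.
  pose proof PI2_1 as HPI. pose proof PI2_3_2 as HPI2.
  assert (HSB : 998/1000*b <= sin b).
  { pose proof (sin_lb3 b ltac:(lra) ltac:(lra)). nra. }
  set (y2 := e - 2*a + b).
  assert (HS2 : y2*(1-375/1000*e*e) <= sin y2).
  { assert (0 <= y2 <= 3/2*e) by (unfold y2; lra).
    pose proof (sin_lb3 y2 ltac:(lra) ltac:(lra)).
    assert (y2*y2 <= 9/4*e*e) by nra. nra. }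
  replace (5*e - e - b) with (4*e - b) by ring.
  set (y1 := 4*e - b).
  assert (HS1 : y1*(1-8*e*e/3) <= sin y1).
  { assert (0 <= y1 <= 4*e) by (unfold y1; lra).
    pose proof (sin_lb3 y1 ltac:(lra) ltac:(lra)).
    assert (y1*y1 <= 16*e*e) by nra. nra. }
  assert (HSA : 0 <= sin a <= a).
  { split. apply sin_ge_0; lra. left; apply sin_lt_x; lra. }
  assert (HSX : 0 <= sin (5*e - a) <= 5*e - a).
  { split. apply sin_ge_0; lra. left; apply sin_lt_x; lra. }
  assert (HC : 0 <= cos (5*e) <= 1).
  { split. apply cos_ge_0; lra. apply COS_bound. }
  assert (HP := poly a b e Ha Hab Hb Hbe He). fold y1 y2 in HP.
  assert (Hy1 : 0 < y1*(1-8*e*e/3)) by (unfold y1; nra).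
  assert (Hy2 : 0 < y2*(1-375/1000*e*e)) by (unfold y2; nra).
  assert (HAX : sin a * sin (5*e - a) <= a * (5*e - a)) by nra.
  set (M := sin b * sin y1 - sin a * sin (5*e - a)).
  assert (Hlow : 0 < sin b * sin b + sin b * sin y2 + 2*M).
  { unfold M.
    assert (sin b * (sin b + sin y2 + 2*sin y1) >=
            998/1000*b*(998/1000*b + y2*(1-375/1000*e*e) + 2*y1*(1-8*e*e/3))).
    { apply Rle_ge. apply Rmult_le_compat; nra. }
    nra. }
  destruct (Rle_lt_dec 0 M).
  - assert (0 < sin y2) by nra. nra.
  - nra.
Qed.

Lemma fdist u1 u2 o1 o2 p q p' q' : u1^2+u2^2 = 1 ->
  pdist (o1 + p*u1 - q*u2, o2 + p*u2 + q*u1) (o1 + p'*u1 - q'*u2, o2 + p'*u2 + q'*u1)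
  = sqrt ((p-p')^2+(q-q')^2).
Proof.
  intros N. unfold pdist; simpl. f_equal.
  transitivity (((p-p')^2+(q-q')^2)*(u1^2+u2^2)); [ring | rewrite N; ring].
Qed.

Lemma sqrt_eq1 X : 0 <= X -> sqrt X = 1 -> X = 1.
Proof. intros H E. rewrite <- (sqrt_sqrt X H), E. ring. Qed.

Theorem lemma2 (O A B : point) (alpha beta : R) :
  pdist A O = 1 -> pdist B O = 1 ->
  ccw O A B ->
  angle B O A < 1/5 ->
  0 < alpha -> alpha < 3 * beta / 4 -> beta < angle B O A ->
  exists P : point,
    pdist P (rotate A alpha O) = 1 /\ pdist P (rotate B beta O) = 1 /\
    pdist P O < 1 /\ pdist P A < 20 * angle B O A.
Proof.
  intros HA HB Hccw Hang Hal Hab Hbe.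
  destruct O as [o1 o2], A as [a1 a2], B as [b1 b2].
  pose (u1 := a1 - o1); assert (E1 : a1 = o1 + u1) by (unfold u1; ring); clearbody u1; subst a1.
  pose (u2 := a2 - o2); assert (E2 : a2 = o2 + u2) by (unfold u2; ring); clearbody u2; subst a2.
  pose (v1 := b1 - o1); assert (E3 : b1 = o1 + v1) by (unfold v1; ring); clearbody v1; subst b1.
  pose (v2 := b2 - o2); assert (E4 : b2 = o2 + v2) by (unfold v2; ring); clearbody v2; subst b2.
  assert (Nu : u1^2 + u2^2 = 1).
  { unfold pdist in HA; simpl in HA. apply sqrt_eq1; [nra|].
    rewrite <- HA. f_equal. ring. }
  assert (Nv : v1^2 + v2^2 = 1).
  { unfold pdist in HB; simpl in HB. apply sqrt_eq1; [nra|].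
    rewrite <- HB. f_equal. ring. }
  set (eta := angle (o1 + v1, o2 + v2) (o1, o2) (o1 + u1, o2 + u2)) in *.
  pose (c := v1*u1 + v2*u2). pose (s := u1*v2 - u2*v1).
  assert (Heta : eta = acos c).
  { unfold eta, angle. rewrite HA, HB. simpl. f_equal. unfold c. field. }
  assert (Hs : s > 0) by (unfold ccw in Hccw; simpl in Hccw; unfold s; lra).
  assert (Lag : c^2 + s^2 = 1).
  { transitivity ((u1^2+u2^2)*(v1^2+v2^2)). unfold c, s; ring. rewrite Nu, Nv; ring. }
  assert (Hcos : cos eta = c) by (rewrite Heta; apply cos_acos; nra).
  assert (Hsin : sin eta = s).
  { rewrite Heta, sin_acos by nra. replace (1 - c²) with (s^2) by (unfold Rsqr; nra).
    apply sqrt_pow2; lra. }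
  assert (Hv1 : v1 = c*u1 - s*u2).
  { transitivity (v1*(u1^2+u2^2)). rewrite Nu; ring. unfold c, s; ring. }
  assert (Hv2 : v2 = c*u2 + s*u1).
  { transitivity (v2*(u1^2+u2^2)). rewrite Nu; ring. unfold c, s; ring. }
  clearbody c s. subst v1 v2.
  assert (Heta0 : 0 < eta).
  { pose proof (acos_bound c). rewrite <- Heta in H.
    destruct (Req_dec eta 0) as [E|E]; [|lra].
    rewrite E, sin_0 in Hsin. lra. }
  clearbody eta.
  pose proof PI2_1 as HPI. pose proof PI2_3_2 as HPI2.
  set (a := alpha/2). set (b := beta/2).
  assert (Ea : alpha = 2*a) by (unfold a; field).
  assert (Eb : beta = 2*b) by (unfold b; field).
  clearbody a b. subst alpha beta.
  set (f := fun z => (1 - cos (2*a) + cos z - cos eta + cos (eta + 2*b))^2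
       + (sin z - sin (2*a) - sin eta + sin (eta + 2*b))^2 - 1).
  assert (Hcont : continuity f).
  { unfold f. reg. }
  assert (Hf0 : f (2*a) < 0).
  { unfold f. pose proof (key 0 b eta 0) as K.
    replace (2*0) with 0 in K by ring. rewrite cos_0, sin_0 in K.
    replace (1 - 1 + 1) with 1 in K by ring.
    replace (0 - 0) with 0 in K by ring.
    replace (1 - cos (2*a) + cos (2*a)) with 1 by ring.
    replace (sin (2*a) - sin (2*a)) with 0 by ring.
    rewrite K.
    replace (0 - eta - b) with (-(eta + b)) in * by ring.
    replace (eta - 0 + b) with (eta + b) by ring.
    rewrite sin_neg, sin_0.
    assert (sin b < sin (eta + b)) by (apply sin_increasing_1; lra).
    assert (0 < sin b) by (apply sin_gt_0; lra).
    nra. }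
  assert (Hf1 : 0 < f (2*(5*eta))).
  { unfold f. rewrite (key a b eta (5*eta)).
    pose proof (key_pos a b eta ltac:(lra) ltac:(lra) ltac:(lra) ltac:(lra) ltac:(lra)).
    lra. }
  destruct (IVT f (2*a) (2*(5*eta)) Hcont ltac:(lra) Hf0 Hf1) as [z [Hz Hfz]].
  assert (Hza : 2*a < z).
  { destruct (Req_dec z (2*a)) as [E|E]; [rewrite E in Hfz; lra | lra]. }
  set (p := 1 - cos (2*a) + cos z). set (q := sin z - sin (2*a)).
  exists (o1 + p*u1 - q*u2, o2 + p*u2 + q*u1).
  assert (HOA : rotate (o1 + u1, o2 + u2) (2*a) (o1, o2)
     = (o1 + (1 - cos (2*a))*u1 - (- sin (2*a))*u2, o2 + (1 - cos (2*a))*u2 + (- sin (2*a))*u1)).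
  { unfold rotate; simpl. f_equal; ring. }
  set (Bx := c - (cos (2*b) * c - sin (2*b) * s)).
  set (By := s - (sin (2*b) * c + cos (2*b) * s)).
  assert (HOB : rotate (o1 + (c*u1 - s*u2), o2 + (c*u2 + s*u1)) (2*b) (o1, o2)
     = (o1 + Bx*u1 - By*u2, o2 + Bx*u2 + By*u1)).
  { unfold rotate, Bx, By; simpl. f_equal; ring. }
  assert (HO : (o1, o2) = (o1 + 0*u1 - 0*u2, o2 + 0*u2 + 0*u1)) by (f_equal; ring).
  assert (HAf : (o1 + u1, o2 + u2) = (o1 + 1*u1 - 0*u2, o2 + 1*u2 + 0*u1)) by (f_equal; ring).
  set (w := z/2). assert (Ez : z = 2*w) by (unfold w; field). clearbody w.
  assert (Hwa : 0 < sin (w - a)) by (apply sin_gt_0; lra).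
  assert (HwaX : sin (w - a) < w - a) by (apply sin_lt_x; lra).
  assert (Hdist : (p - 1)^2 + q^2 = 4 * (sin (w - a))^2).
  { unfold p, q. rewrite Ez.
    pose proof (ps (w-a) (w-a) 0 (2*w - 2*a) ltac:(ring) ltac:(ring)) as P1.
    rewrite cos_0, (cm (2*w) (2*a) (2*w-2*a)) in P1 by ring.
    pose proof (pyth (2*w)). pose proof (pyth (2*a)). nra. }
  split; [| split; [| split]].
  - rewrite HOA, fdist by exact Nu.
    replace ((p - (1 - cos (2 * a))) ^ 2 + (q - - sin (2 * a)) ^ 2) with 1. apply sqrt_1.
    unfold p, q. pose proof (pyth z). nra.
  - rewrite HOB, fdist by exact Nu.
    replace ((p - Bx) ^ 2 + (q - By) ^ 2) with 1. apply sqrt_1.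
    unfold f in Hfz. rewrite cos_plus, sin_plus, Hcos, Hsin in Hfz.
    unfold p, q, Bx, By. nra.
  - rewrite HO, fdist by exact Nu. rewrite <- sqrt_1. apply sqrt_lt_1_alt. split; [nra|].
    assert (H2 : cos (2*w) - cos (2*a) = -2 * (sin (w - a) * sin (w + a))).
    { rewrite (ps2 (w-a) (w+a) (2*a) (2*w)) by ring. lra. }
    assert (H3 : 1 - cos (2*w - 2*a) = 2 * (sin (w-a) * sin (w-a))).
    { rewrite (ps (w-a) (w-a) 0 (2*w - 2*a)) by ring. rewrite cos_0. lra. }
    assert (H4 : sin (w - a) < sin (w + a)) by (apply sin_increasing_1; lra).
    assert (H5 : (p - 0)^2 + (q - 0)^2 = 1 + 2*(cos (2*w) - cos (2*a)) + 2*(1 - cos (2*w - 2*a))).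
    { unfold p, q. rewrite Ez, (cm (2*w) (2*a) (2*w-2*a)) by ring.
      pose proof (pyth (2*w)). pose proof (pyth (2*a)). nra. }
    rewrite H5, H2, H3. nra.
  - rewrite HAf, fdist by exact Nu.
    replace ((p - 1) ^ 2 + (q - 0) ^ 2) with ((p-1)^2 + q^2) by ring. rewrite Hdist.
    replace (20 * eta) with (sqrt ((20*eta)^2)) by (apply sqrt_pow2; lra).
    apply sqrt_lt_1_alt. split; [nra|]. nra.
Qed.
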